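(* Let $G$ be an $n$-vertex near triangulation that is either $K_4$ (embedded with a triangle as outer cycle and one interior vertex) or $G_6^3$, let $C$ be its outer cycle, and let $v$ be a vertex of $C$ with $d(v)=3$ that has a neighbor in $V(G)\setminus V(C)$. Then there exists an orientation $D$ of $G$ with $\mathrm{diam}(D)=\overrightarrow{\mathrm{diam}}(G)=\frac{n}{2}+1$ such that $\max\{d_D(u,v),d_D(v,u)\}\le \frac{n}{2}$ for all $u\in V(G)$.
   Context: A near triangulation is a plane graph in which every face except possibly the outer face is bounded by a triangle; its outer cycle bounds the outer face. $G_6^3$ is the plane graph on vertices $a,b,c,x,y,z$ with edges $ab,bc,ca,xa,xb,xc,by,cy,yz,bz$, embedded with outer cycle $abzyca$, interior vertex $x$, and inner faces $abx,bcx,cax,bcy,byz$. For a directed graph $D$, $d_D(u,v)$ is the length of a shortest directed path from $u$ to $v$ and $\mathrm{diam}(D)=\max_{u,v}d_D(u,v)$; $\overrightarrow{\mathrm{diam}}(G)$ is the minimum of $\mathrm{diam}(D)$ over strongly connected orientations $D$ of $G$. *)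

(* Defs.v *)
From mathcomp Require Import all_boot all_order.
Set Implicit Arguments. Unset Strict Implicit. Unset Printing Implicit Defensive.

Definition deg (T : finType) (e : rel T) (v : T) : nat := #|[set w | e v w]|.

Definition is_orientation (T : finType) (e : rel T) (A : {set T * T}) : bool :=
  [forall u, forall v, ((u, v) \in A) ==> e u v] &&
  [forall u, forall v, e u v ==> (((u, v) \in A) (+) ((v, u) \in A))].

Definition arc (T : finType) (A : {set T * T}) : rel T := fun x y => (x, y) \in A.

Definition strongly_connected (T : finType) (A : {set T * T}) : bool :=
  [forall u, forall v, connect (arc A) u v].

Fixpoint reach (T : finType) (A : {set T * T}) (k : nat) (u v : T) : bool :=
  if k is k'.+1 then reach A k' u v || [exists w, reach A k' u w && arc A w v]
  else u == v.

(* If v is not reachable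
   from u the value is the sentinel #|T| (a shortest path, when it exists, has
   length <= #|T| - 1); this case never matters for strongly connected D. *)
Definition dist (T : finType) (A : {set T * T}) (u v : T) : nat :=
  find (fun k => reach A k u v) (iota 0 #|T|).

Definition diam (T : finType) (A : {set T * T}) : nat :=
  \max_(p : T * T) dist A p.1 p.2.

(* oriented diameter: minimum of diam(D) over strongly connected orientations
   D of e (default value #|T| ^ 2 if e has none, which never matters here). *)
Definition odiam (T : finType) (e : rel T) : nat :=
  \big[minn/ (#|T| ^ 2)]_(A : {set T * T} | is_orientation e A && strongly_connected A)
     diam A.

Definition lemma2p6_claim (T : finType) (e : rel T) (C : {set T}) : Prop :=
  forall v : T, v \in C -> deg e v = 3 -> (exists2 w, e v w & w \notin C) ->
  exists A : {set T * T},
    [/\ is_orientation e A, strongly_connected A,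
        diam A = odiam e, odiam e = #|T| %/ 2 + 1 &
        forall u : T, maxn (dist A u v) (dist A v u) <= #|T| %/ 2].

Definition edge_rel (n : nat) (E : seq (nat * nat)) : rel 'I_n :=
  fun u v => ((val u, val v) \in E) || ((val v, val u) \in E).

(* K4, vertices a=0, b=1, c=2, x=3; outer cycle abca, interior vertex x. *)
Definition K4_edges : seq (nat * nat) :=
  [:: (0,1); (1,2); (2,0); (3,0); (3,1); (3,2)].
Definition K4 : rel 'I_4 := @edge_rel 4 K4_edges.
Definition K4_outer : {set 'I_4} := [set v : 'I_4 | val v \in [:: 0; 1; 2]].

(* G_6^3, vertices a=0, b=1, c=2, x=3, y=4, z=5; edges
   ab,bc,ca,xa,xb,xc,by,cy,yz,bz; outer cycle a b z y c a; interior x. *)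
Definition G63_edges : seq (nat * nat) :=
  [:: (0,1); (1,2); (2,0); (3,0); (3,1); (3,2); (1,4); (2,4); (4,5); (1,5)].
Definition G63 : rel 'I_6 := @edge_rel 6 G63_edges.
Definition G63_outer : {set 'I_6} := [set v : 'I_6 | val v \in [:: 0; 1; 5; 4; 2]].

(* Main.v *)
Require Import Defs.
From mathcomp Require Import all_boot all_order zify.
Import Defs.
Set Implicit Arguments. Unset Strict Implicit. Unset Printing Implicit Defensive.

Fixpoint reachn (r : nat -> nat -> bool) (n k u v : nat) : bool :=
  if k is k'.+1 then reachn r n k' u v || has (fun w => reachn r n k' u w && r w v) (iota 0 n)
  else u == v.

Definition rb (E : seq (nat * nat)) (bs : seq bool) (i j : nat) : bool :=
  if (i, j) \in E then nth false bs (index (i, j) E)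
  else if (j, i) \in E then ~~ nth false bs (index (j, i) E) else false.

Fixpoint allbits (n : nat) : seq (seq bool) :=
  if n is n'.+1 then map (cons true) (allbits n') ++ map (cons false) (allbits n')
  else [:: [::]].

Lemma allbitsP bs : bs \in allbits (size bs).
Proof.
elim: bs => [|b s IH] //=; rewrite mem_cat.
have inj (c : bool) : injective (cons c) by move=> x y [].
by case: b; rewrite !(mem_map (inj _)) IH ?orbT.
Qed.

Section N.
Variable n : nat.
Implicit Types (A : {set 'I_n * 'I_n}) (u v : 'I_n).

Lemma reachN A rn k u v : (forall x y, arc A x y = rn (val x) (val y)) ->
  reach A k u v = reachn rn n k (val u) (val v).
Proof.
move=> H; elim: k v => [|k IH] v /=; first by [].
rewrite IH; congr orb.
apply/existsP/hasP => [[w /andP[h1 h2]]|[w wi /andP[h1 h2]]].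
  by exists (val w); rewrite ?mem_iota ?add0n ?ltn_ord //= -IH h1 -H.
have wn : w < n by move: wi; rewrite mem_iota add0n.
by exists (Ordinal wn); rewrite IH h1 H.
Qed.

Lemma distN A rn u v : (forall x y, arc A x y = rn (val x) (val y)) ->
  dist A u v = find (fun k => reachn rn n k (val u) (val v)) (iota 0 n).
Proof.
by move=> H; rewrite /dist card_ord; apply: eq_find => k; rewrite (@reachN A rn k u v H).
Qed.

Lemma allN (P : nat -> nat -> bool) :
  all (fun i => all (P i) (iota 0 n)) (iota 0 n) -> forall u v : 'I_n, P u v.
Proof.
move=> /allP H u v.
have hu : val u \in iota 0 n by rewrite mem_iota add0n ltn_ord.
have /allP := H _ hu.
by apply; rewrite mem_iota add0n ltn_ord.
Qed.

Lemma hasN (P : nat -> nat -> bool) :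
  has (fun i => has (P i) (iota 0 n)) (iota 0 n) -> exists u v : 'I_n, P u v.
Proof.
move=> /hasP[i]; rewrite mem_iota add0n => ilt /hasP[j]; rewrite mem_iota add0n => jlt h.
by exists (Ordinal ilt), (Ordinal jlt).
Qed.

Lemma reach_mono A i j u v : i <= j -> reach A i u v -> reach A j u v.
Proof.
elim: j => [|j IH]; first by rewrite leqn0 => /eqP->.
rewrite leq_eqVlt => /orP[/eqP->//|/IH h /h] /=; by move->.
Qed.

Lemma dist_gt A u v k : k < n -> ~~ reach A k u v -> k < dist A u v.
Proof.
move=> kn nr; rewrite ltnNge; apply/negP => le.
have hf : dist A u v < size (iota 0 #|'I_n|).
  by rewrite size_iota card_ord; apply: leq_ltn_trans le kn.
have dn : dist A u v < n by rewrite size_iota card_ord in hf.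
rewrite -has_find in hf.
have := nth_find 0 hf; rewrite -/(dist A u v) nth_iota ?card_ord // add0n.
by move/(reach_mono le); rewrite (negbTE nr).
Qed.

Lemma dist_le_diam A u v : dist A u v <= diam A.
Proof. by rewrite /diam; apply: (@leq_bigmax _ (fun p => dist A p.1 p.2) (u, v)). Qed.

Lemma reach_connect A k u v : reach A k u v -> connect (arc A) u v.
Proof.
elim: k v => [|k IH] v /=; first by move/eqP->.
case/orP => [/IH //|/existsP[w /andP[/IH h1 h2]]].
by apply: connect_trans h1 (connect1 h2).
Qed.


End N.

Lemma odiam_ge (T : finType) (e : rel T) c : c <= #|T| ^ 2 ->
  (forall A, is_orientation e A -> c <= diam A) -> c <= odiam e.
Proof.
move=> h0 H; rewrite /odiam; elim/big_ind: _ => //.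
  by move=> x y hx hy; rewrite leq_min hx hy.
by move=> A /andP[/H].
Qed.

Lemma bigmin_seq_le (I : eqType) (r : seq I) (P : pred I) (F : I -> nat) x a :
  a \in r -> P a -> \big[minn/x]_(i <- r | P i) F i <= F a.
Proof.
elim: r => [|b r IH] //=; rewrite inE big_cons => /orP[/eqP<- ->|/IH h /h]; first exact: geq_minl.
by case: (P b) => // h'; apply: leq_trans h'; exact: geq_minr.
Qed.

Lemma odiam_le (T : finType) (e : rel T) A :
  is_orientation e A -> strongly_connected A -> odiam e <= diam A.
Proof.
move=> h1 h2; rewrite /odiam; apply: bigmin_seq_le; first by rewrite mem_index_enum.
by rewrite h1 h2.
Qed.

Lemma orient_rb m E A : is_orientation (@edge_rel m.+1 E) A ->
  forall x y : 'I_m.+1, arc A x y =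
     rb E (map (fun p => arc A (inord p.1) (inord p.2)) E) (val x) (val y).
Proof.
move=> /andP[/forallP H1 /forallP H2] x y.
have h1 u v : arc A u v -> @edge_rel m.+1 E u v by move: (H1 u) => /forallP/(_ v)/implyP.
have h2 u v : @edge_rel m.+1 E u v -> arc A u v (+) arc A v u.
  by move: (H2 u) => /forallP/(_ v)/implyP.
rewrite /rb; case: ifP => [xy|nxy].
  by rewrite (nth_map (0, 0)) ?index_mem // nth_index //= !inord_val.
case: ifP => [yx|nyx].
  have e : @edge_rel m.+1 E x y by rewrite /edge_rel yx orbT.
  rewrite (nth_map (0, 0)) ?index_mem // nth_index //= !inord_val.
  by move: (h2 _ _ e); case: (arc A x y); case: (arc A y x).
by apply/negbTE/negP => /h1; rewrite /edge_rel nxy nyx.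
Qed.

Fixpoint Rb (r : nat -> nat -> bool) (n k u : nat) : seq bool :=
  if k is k'.+1 then
    let R := Rb r n k' u in
    [seq nth false R v || has (fun w => nth false R w && r w v) (iota 0 n) | v <- iota 0 n]
  else [seq v == u | v <- iota 0 n].

Lemma RbE r n k u v : v < n -> reachn r n k u v = nth false (Rb r n k u) v.
Proof.
elim: k v => [|k IH] v vn /=; first by rewrite (nth_map 0) ?size_iota // nth_iota // eq_sym.
rewrite (nth_map 0) ?size_iota // nth_iota // add0n IH //; congr orb.
by apply: eq_in_has => w; rewrite mem_iota add0n => wn; rewrite IH.
Qed.

Lemma size_Rb r n k u : size (Rb r n k u) = n.
Proof. by case: k => [|k] /=; rewrite size_map size_iota. Qed.

Lemma dist_le n (A : {set 'I_n * 'I_n}) u v c : c < n -> reach A c u v -> dist A u v <= c.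
Proof.
move=> cn h; rewrite leqNgt; apply/negP => lt.
have := before_find 0 lt; rewrite nth_iota ?card_ord // add0n.
by rewrite h.
Qed.

Definition edge_nat (E : seq (nat * nat)) i j := ((i, j) \in E) || ((j, i) \in E).

Lemma lower m E c :
  all (fun bs => has (fun i => ~~ all id (Rb (rb E bs) m.+1 c i)) (iota 0 m.+1)) (allbits (size E)) ->
  c < m.+1 -> forall A, is_orientation (@edge_rel m.+1 E) A -> c.+1 <= diam A.
Proof.
move=> H cn A HA.
set bs := map (fun p => arc A (inord p.1) (inord p.2)) E.
have hr := orient_rb HA.
have hb : bs \in allbits (size E) by have := allbitsP bs; rewrite size_map.
have /allP/(_ bs hb) := H; case/hasP=> i.
rewrite mem_iota add0n => iN.
rewrite -has_predC => /(has_nthP false)[j]; rewrite size_Rb => jN /= hj.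
apply: leq_trans (dist_le_diam A (Ordinal iN) (Ordinal jN)).
apply: dist_gt => //.
by rewrite (reachN c (Ordinal iN) (Ordinal jN) hr) RbE.
Qed.

Lemma good_A m E bs (v : 'I_m.+1) :
  let c := m.+1 %/ 2 + 1 in let r := rb E bs in
  all (fun bs => has (fun i => ~~ all id (Rb (rb E bs) m.+1 c.-1 i)) (iota 0 m.+1)) (allbits (size E)) ->
  0 < c < m.+1 ->
  all (fun i => all (fun j => r i j ==> edge_nat E i j) (iota 0 m.+1)) (iota 0 m.+1) ->
  all (fun i => all (fun j => edge_nat E i j ==> (r i j (+) r j i)) (iota 0 m.+1)) (iota 0 m.+1) ->
  all (fun u => all id (Rb r m.+1 c u)) (iota 0 m.+1) ->
  all (fun u => nth false (Rb r m.+1 (m.+1 %/ 2) u) (val v)) (iota 0 m.+1) && all id (Rb r m.+1 (m.+1 %/ 2) (val v)) ->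
  exists A : {set 'I_m.+1 * 'I_m.+1},
    [/\ is_orientation (@edge_rel m.+1 E) A, strongly_connected A,
        diam A = odiam (@edge_rel m.+1 E), odiam (@edge_rel m.+1 E) = #|'I_m.+1| %/ 2 + 1 &
        forall u : 'I_m.+1, maxn (dist A u v) (dist A v u) <= #|'I_m.+1| %/ 2].
Proof.
move=> c r Hlow /andP[c0 cn] H1 H2 H3 /andP[H4 H5].
pose A : {set 'I_m.+1 * 'I_m.+1} := [set p | r (val p.1) (val p.2)].
have hr : forall x y : 'I_m.+1, arc A x y = r (val x) (val y) by move=> x y; rewrite /arc inE.
have reachc : forall x y : 'I_m.+1, reach A c x y.
  move=> x y; rewrite (reachN c x y hr) RbE ?ltn_ord //.
  have hx : val x \in iota 0 m.+1 by rewrite mem_iota add0n ltn_ord.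
  move/allP: H3 => /(_ _ hx) /allP; apply.
  by apply: mem_nth; rewrite size_Rb ltn_ord.
have HO : is_orientation (@edge_rel m.+1 E) A.
  apply/andP; split; apply/forallP => x; apply/forallP => y.
    by rewrite -/(arc A x y) hr; apply: (allN H1).
  by rewrite -/(arc A x y) -/(arc A y x) !hr; apply: (allN H2).
have HS : strongly_connected A.
  by apply/forallP => x; apply/forallP => y; apply: reach_connect (reachc x y).
have Hd : diam A <= c.
  by apply/bigmax_leqP => p _; apply: dist_le.
have Hl : c <= odiam (@edge_rel m.+1 E).
  apply: odiam_ge.
    rewrite card_ord; apply: leq_trans (ltnW cn) _.
    by rewrite -{1}(expn1 m.+1) leq_pexp2l.
  by move=> B HB; have := lower Hlow (leq_ltn_trans (leq_pred c) cn) HB; rewrite prednK.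
have Hu := odiam_le HO HS.
exists A; split => //.
- by apply/eqP; rewrite eqn_leq (leq_trans Hd Hl) Hu.
- by rewrite card_ord; apply/eqP; rewrite eqn_leq (leq_trans Hu Hd) Hl.
move=> u; rewrite card_ord geq_max; apply/andP; split; apply: dist_le.
- by rewrite ltn_divLR //; lia.
- rewrite (reachN _ u v hr) RbE ?ltn_ord //.
  have hu : val u \in iota 0 m.+1 by rewrite mem_iota add0n ltn_ord.
  by move/allP: H4 => /(_ _ hu).
- by rewrite ltn_divLR //; lia.
rewrite (reachN _ v u hr) RbE ?ltn_ord //.
by move/allP: H5; apply; apply: mem_nth; rewrite size_Rb ltn_ord.
Qed.

Definition bsK1 := [:: false; false; false; false; true; false].
Definition bsK2 := [:: false; false; false; true; false; false].
Definition bsG := [:: false; false; true; false; true; true; true; false; false; true].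

Lemma lowK : all (fun bs => has (fun i => ~~ all id (Rb (rb K4_edges bs) 4 (4 %/ 2 + 1).-1 i)) (iota 0 4)) (allbits (size K4_edges)).
Proof. vm_compute. reflexivity. Qed.

Lemma lowG : all (fun bs => has (fun i => ~~ all id (Rb (rb G63_edges bs) 6 (6 %/ 2 + 1).-1 i)) (iota 0 6)) (allbits (size G63_edges)).
Proof. vm_compute. reflexivity. Qed.

Theorem lemma2p6 :
  lemma2p6_claim K4 K4_outer /\ lemma2p6_claim G63 G63_outer.
Proof.
split.
{ move=> v vC _ [w hw hwC].
  case: v vC hw hwC => [[|[|[|[|m]]]] Hv] vC hw hwC; rewrite ?inE /= in vC.
  all: try done.
  1,2: apply: (@good_A 3 K4_edges bsK1); [exact: lowK | vm_compute; reflexivity ..].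
  apply: (@good_A 3 K4_edges bsK2); [exact: lowK | vm_compute; reflexivity ..]. }
{ move=> v vC _ [w hw hwC].
  case: v vC hw hwC => [[|[|[|[|[|[|m]]]]]] Hv] vC hw hwC; rewrite ?inE /= in vC.
  all: try done.
  all: try by (case: w hw hwC => [[|[|[|[|[|[|m']]]]]] Hw] hw hwC; rewrite ?inE /= in hwC).
  all: apply: (@good_A 5 G63_edges bsG); [exact: lowG | vm_compute; reflexivity ..]. }
Qed.
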